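(* Let $X=x_1x_2\cdots x_s$ be a batch of $S(H)$, where each $x_j$ is $s(v)$ for some vertex $v$ or $e(v,w)$ for some edge $(v,w)$ of $H$. Then for every $1\le j\le s$, some phrase of the LZ77 parsing of the string $x_1\cdots x_s$ ends at the last symbol of $x_j$.
   Context: $H$ is a directed graph without loops in which no vertex has outdegree exactly 1. For each vertex $v$ introduce three symbols $v$, $v'$, $\$_v$; all these symbols are pairwise distinct (over all vertices). For a vertex $v$ with outdegree $d=d(v)\ge 1$, let $w_0,\dots,w_{d-1}$ be its out-neighbors in a fixed cyclic order (indices mod $d$); the edge $(v,w_{i-1})$ cyclicly precedes $(v,w_i)$. Define $e(v,w_i)=(v'w_{i-1})^4v'w_i$ for $0\le i<d$ and $s(v)=v^4(v')^5\$_v$. $S(H)$ is the set of all strings $s(v)$ ($v$ a vertex) and $e(v,w)$ ($(v,w)$ an edge). A batch is a sequence of distinct elements of $S(H)$, identified with their concatenation; a schedule is a partition of $S(H)$ into batches. LZ77 parsing of a string $z$: $z=z_1z_2\cdots z_t$ where, once $z_1,\dots,z_{i-1}$ are determined and the remaining suffix is nonempty, $z_i$ is the longest nonempty prefix $u$ of the remaining suffix such that $u^-$ ($u$ with its last symbol deleted) has an occurrence in $z$ starting at a position strictly smaller than the starting position of $u$ (the empty string always qualifies). The $z_i$ are the phrases; $|\mathcal C(z)|=t$ is the number of phrases. *)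

(* Defs.v *)
From HB Require Import structures.
From mathcomp Require Import all_boot.
Set Implicit Arguments. Unset Strict Implicit. Unset Printing Implicit Defensive.

Section Defs.
Variable V : finType.

(* Symbols: for each vertex v the symbols v, v', $_v; pairwise distinct by construction. *)
Inductive sym := SymV of V | SymP of V | SymD of V.

Definition sym_enc (a : sym) : V + V + V :=
  match a with SymV v => inl (inl v) | SymP v => inl (inr v) | SymD v => inr v end.
Definition sym_dec (x : V + V + V) : sym :=
  match x with inl (inl v) => SymV v | inl (inr v) => SymP v | inr v => SymD v end.
Lemma sym_encK : cancel sym_enc sym_dec. Proof. by case. Qed.
HB.instance Definition _ := Equality.copy sym (can_type sym_encK).

Inductive item := SItem of V | EItem of V & V.
Definition item_enc (x : item) : V + V * V :=
  match x with SItem v => inl v | EItem v w => inr (v, w) end.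
Definition item_dec (x : V + V * V) : item :=
  match x with inl v => SItem v | inr (v, w) => EItem v w end.
Lemma item_encK : cancel item_enc item_dec. Proof. by case => // ? []. Qed.
HB.instance Definition _ := Equality.copy item (can_type item_encK).

(* cyc v : the out-neighbours w_0,...,w_{d-1} of v in their fixed cyclic order *)
Variable cyc : V -> seq V.

Definition cyc_pred (v w : V) : V :=
  let d := size (cyc v) in nth w (cyc v) ((index w (cyc v) + d.-1) %% d).

Definition s_str (v : V) : seq sym :=
  nseq 4 (SymV v) ++ nseq 5 (SymP v) ++ [:: SymD v].
Definition e_str (v w : V) : seq sym :=
  flatten (nseq 4 [:: SymP v; SymV (cyc_pred v w)]) ++ [:: SymP v; SymV w].

Definition item_str (x : item) : seq sym :=
  match x with SItem v => s_str v | EItem v w => e_str v w end.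

Definition item_in (E : rel V) (x : item) : bool :=
  match x with SItem _ => true | EItem v w => E v w end.

Definition batch_str (X : seq item) : seq sym := flatten (map item_str X).
End Defs.

Section LZ.
Variable T : eqType.

(* l (>= 1) is admissible as length of a phrase starting at position p of z:
   u = z[p, p+l) and u^- = z[p, p+l-1) occurs in z starting at some q < p
   (the empty u^- always qualifies). *)
Definition lz_ok (z : seq T) (p l : nat) : bool :=
  (0 < l) && ((l == 1) ||
     [exists q : 'I_p, take l.-1 (drop q z) == take l.-1 (drop p z)]).

Definition lz_len (z : seq T) (p : nat) : nat :=
  \max_(l < (size z - p).+1 | lz_ok z p l) l.

Inductive phrase_start (z : seq T) : nat -> Prop :=
| ps0 : phrase_start z 0
| psS p : phrase_start z p -> p < size z -> phrase_start z (p + lz_len z p).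

(* some phrase of the LZ77 parsing of z ends exactly at position k (i.e. its
   last symbol is z[k-1]) *)
Definition phrase_ends_at (z : seq T) (k : nat) : Prop :=
  exists p, [/\ phrase_start z p, p < size z & p + lz_len z p = k].
End LZ.

(* Main.v *)
Require Import Defs.
From HB Require Import structures.
From mathcomp Require Import all_boot zify.
Set Implicit Arguments. Unset Strict Implicit. Unset Printing Implicit Defensive.
Section LZL.
Variable T : eqType.
Variable d : T.
Lemma len_ok (z : seq T) p : p < size z ->
  [/\ lz_ok z p (lz_len z p), 0 < lz_len z p & lz_len z p <= size z - p].
Proof.
move=> Hp.
have H1 : lz_ok z p 1 by [].
have Hn : 1 < (size z - p).+1 by lia.
have : 0 < #|[pred l : 'I_(size z - p).+1 | lz_ok z p l]|.
  apply/card_gt0P; exists (Ordinal Hn); by [].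
move/(eq_bigmax_cond (fun l : 'I_(size z - p).+1 => nat_of_ord l)) => [l0 Hl0 E].
rewrite /lz_len E. have Hl1 := ltn_ord l0. rewrite inE /= in Hl0.
split => //=; first by case/andP: Hl0.
Qed.
Lemma len_ge (z : seq T) p l : lz_ok z p l -> l <= size z - p -> l <= lz_len z p.
Proof.
move=> Hok Hl. have Hn : l < (size z - p).+1 by lia.
exact: (@leq_bigmax_cond _ (fun l : 'I_(size z - p).+1 => lz_ok z p l) (fun l : 'I_(size z - p).+1 => nat_of_ord l) (Ordinal Hn)).
Qed.
Lemma ok_match (z : seq T) p l : lz_ok z p l -> 1 < l ->
  exists2 q, q < p & forall t, t < l.-1 -> nth d z (q+t) = nth d z (p+t).
Proof.
case/andP => _ /orP [/eqP->|/existsP [q /eqP H]] // _.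
exists q => // t Ht. have := congr1 (fun s => nth d s t) H.
by rewrite !nth_take // !nth_drop.
Qed.
Lemma match_ok (z : seq T) p l q : 0 < l -> q < p -> p + l <= size z ->
  (forall t, t < l.-1 -> nth d z (q+t) = nth d z (p+t)) -> lz_ok z p l.
Proof.
move=> Hl Hq Hs Hm. rewrite /lz_ok Hl /=. apply/orP; right. apply/existsP.
exists (Ordinal Hq). apply/eqP.
have S1 : l.-1 <= size (drop q z) by rewrite size_drop; lia.
have S2 : l.-1 <= size (drop p z) by rewrite size_drop; lia.
apply: (@eq_from_nth _ d); first by rewrite !size_takel.
move=> t. rewrite size_takel // => Ht /=. by rewrite !nth_take // !nth_drop Hm.
Qed.
Lemma cross (z : seq T) p k : p < k -> p < size z -> k < p + lz_len z p ->
  exists2 q, q < p & forall t, t < k - p -> nth d z (q+t) = nth d z (p+t).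
Proof.
move=> Hpk Hp Hk. have [Hok H0 Hs] := len_ok Hp.
have H2 : 1 < lz_len z p by lia.
have [q Hq Hm] := ok_match Hok H2.
exists q => // t Ht; apply: Hm; lia.
Qed.
Lemma reach (z : seq T) p k q : p < k -> k <= size z -> q < p ->
  (forall t, t < (k-p).-1 -> nth d z (q+t) = nth d z (p+t)) -> k <= p + lz_len z p.
Proof.
move=> Hpk Hk Hq Hm.
have : k - p <= lz_len z p.
  apply: len_ge; last lia. apply: (match_ok (q := q)) => //; lia.
lia.
Qed.
End LZL.
Lemma fval i d : 0 < d -> i < d -> (i + d.-1) %% d = if i is i'.+1 then i' else d.-1.
Proof.
move=> Hd Hi. case: i Hi => [|i] Hi.
  by rewrite add0n modn_small // prednK.
rewrite addSn -addnS prednK // modnDr modn_small //. lia.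
Qed.

Section Cyc.
Variable V : finType.
Variable cyc : V -> seq V.
Lemma cp_mem v w : w \in cyc v -> cyc_pred cyc v w \in cyc v.
Proof.
move=> Hw. rewrite /cyc_pred. apply: mem_nth. rewrite ltn_mod.
by case: (cyc v) Hw.
Qed.
Lemma cp_neq v w : uniq (cyc v) -> 1 < size (cyc v) -> w \in cyc v -> cyc_pred cyc v w != w.
Proof.
move=> U S Hw. rewrite /cyc_pred. set s := cyc v. set d := size s.
have Hi : index w s < d by rewrite index_mem.
have Hd : 0 < d by lia.
try have S' : 1 < d := S.
rewrite fval //.
apply/negP => /eqP E.
have Hj : (if index w s is i'.+1 then i' else d.-1) < d by case: (index w s) Hi => [|i] Hi; lia.
have : nth w s (if index w s is i'.+1 then i' else d.-1) == nth w s (index w s)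
  by rewrite nth_index // E.
rewrite nth_uniq //.
case: (index w s) Hi => [|i] Hi /eqP H; lia.
Qed.
Lemma cp_inj v w1 w2 : uniq (cyc v) -> w1 \in cyc v -> w2 \in cyc v ->
  cyc_pred cyc v w1 = cyc_pred cyc v w2 -> w1 = w2.
Proof.
move=> U H1 H2. rewrite /cyc_pred. set s := cyc v. set d := size s.
have Hi1 : index w1 s < d by rewrite index_mem.
have Hi2 : index w2 s < d by rewrite index_mem.
have Hd : 0 < d by lia.
try have S' : 1 < d := S.
rewrite !fval // => E.
have Hj1 : (if index w1 s is i'.+1 then i' else d.-1) < d by case: (index w1 s) Hi1 => [|i] Hi; lia.
have Hj2 : (if index w2 s is i'.+1 then i' else d.-1) < d by case: (index w2 s) Hi2 => [|i] Hi; lia.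
have : nth w1 s (if index w1 s is i'.+1 then i' else d.-1) ==
       nth w1 s (if index w2 s is i'.+1 then i' else d.-1).
  rewrite E. rewrite (set_nth_default w2) //.
rewrite nth_uniq //.
move=> Ee.
have : index w1 s = index w2 s.
  move: Ee Hi1 Hi2; case: (index w1 s) => [|a]; case: (index w2 s) => [|b] /eqP; lia.
move=> Ei. by rewrite -(nth_index w1 H1) Ei (set_nth_default w2) ?nth_index // -Ei.
Qed.
End Cyc.
Section Pos.
Variable V : finType.
Variable cyc : V -> seq V.
Lemma size_item x : size (item_str cyc x) = 10.
Proof. by case: x. Qed.
Lemma size_bs Y : size (batch_str cyc Y) = 10 * size Y.
Proof. elim: Y => //= x Y IH. by rewrite size_cat size_item IH mulnS. Qed.
Lemma zat d dx Y c r : c < size Y -> r < 10 ->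
  nth d (batch_str cyc Y) (10 * c + r) = nth d (item_str cyc (nth dx Y c)) r.
Proof.
elim: Y c => [|x Y IH] [|c] //= Hc Hr.
  by rewrite muln0 add0n nth_cat size_item Hr.
rewrite mulnS -addnA nth_cat size_item ltnNge leq_addr /= addKn. exact: IH.
Qed.
End Pos.

Section Graph.
Variable V : finType.
Variable E : rel V.
Variable cyc : V -> seq V.
Hypothesis Hloop : forall v, ~~ E v v.
Hypothesis Hdeg : forall v, #|[set w | E v w]| != 1.
Hypothesis Hcyc_uniq : forall v, uniq (cyc v).
Hypothesis Hcyc_mem : forall v w, (w \in cyc v) = E v w.
Variable X : seq (item V).
Hypothesis HXuniq : uniq X.
Hypothesis HXin : all (item_in E) X.
Variable d : sym V.
Variable dx : item V.

Local Notation z := (batch_str cyc X).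

Lemma item_edge c v w : c < size X -> nth dx X c = EItem v w -> E v w.
Proof. move=> Hc Ec. by have := all_nthP dx HXin c Hc; rewrite Ec. Qed.

Lemma size2 v w : E v w -> 1 < size (cyc v).
Proof.
move=> Evw.
have H : #|[set w | E v w]| = size (cyc v).
  rewrite -(card_uniqP (Hcyc_uniq v)). apply: eq_card => u. by rewrite inE Hcyc_mem.
have : 0 < #|[set w | E v w]| by apply/card_gt0P; exists w; rewrite inE.
have := Hdeg v. rewrite H. lia.
Qed.

Lemma cpE v w : E v w -> E v (cyc_pred cyc v w) /\ cyc_pred cyc v w != w.
Proof.
move=> Evw. have Hw : w \in cyc v by rewrite Hcyc_mem.
split; first by rewrite -Hcyc_mem cp_mem.
exact: cp_neq (Hcyc_uniq v) (size2 Evw) Hw.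
Qed.

Lemma uniqX c j : c < size X -> j < size X -> nth dx X c = nth dx X j -> c = j.
Proof. move=> Hc Hj E1. apply/eqP. by rewrite -(nth_uniq dx Hc Hj HXuniq) E1. Qed.

Lemma zat' c r i : c < size X -> r < 10 -> i = 10 * c + r ->
  nth d z i = nth d (item_str cyc (nth dx X c)) r.
Proof. move=> Hc Hr ->. exact: zat. Qed.

Lemma dec i : i < size z -> exists c r, [/\ c < size X, r < 10 & i = 10 * c + r].
Proof. rewrite size_bs => H. exists (i %/ 10), (i %% 10). split; lia. Qed.

Lemma posD i v : i < size z -> nth d z i = SymD v ->
  exists2 c, c < size X & nth dx X c = SItem v /\ i = 10 * c + 9.
Proof.
move=> Hi Hz. have [c [r [Hc Hr Hir]]] := dec Hi.
have Z := zat' Hc Hr Hir. rewrite Hz in Z.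
exists c => //.
case Ec: (nth dx X c) Z => [u|u y] Z;
 move: Hr Hir Z; case: r => [|[|[|[|[|[|[|[|[|[|r]]]]]]]]]] //= Hr Hir Z; try discriminate.
by case: Z => ->.
Qed.

Lemma Gl j v w i : j < size X -> nth dx X j = EItem v w ->
  i.+2 < size z ->
  nth d z i = SymV (cyc_pred cyc v w) -> nth d z i.+1 = SymP v ->
  nth d z i.+2 = SymV (cyc_pred cyc v w) ->
  exists2 m, m <= 3 & i.+1 = 10 * j + 2 * m.
Proof.
move=> Hj Ej Hi H0 H1 H2.
have Evw : E v w := item_edge Hj Ej.
have [Evx Hxw] := cpE Evw.
have Hxv : cyc_pred cyc v w != v by apply/eqP => Ex; move: (Hloop v); rewrite -{2}Ex Evx.
have Hi1 : i.+1 < size z by lia.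
have [c [r [Hc Hr Hir]]] := dec Hi1.
have Z1 := zat' Hc Hr Hir. rewrite H1 in Z1.
have ZL : 0 < r -> nth d z i = nth d (item_str cyc (nth dx X c)) r.-1.
  move=> Hr0. apply: zat' => //; lia.
have ZR : r < 9 -> nth d z i.+2 = nth d (item_str cyc (nth dx X c)) r.+1.
  move=> Hr9. apply: zat' => //; lia.
rewrite H0 in ZL. rewrite H2 in ZR.
case Ec: (nth dx X c) Z1 ZL ZR => [u|u y] Z1 ZL ZR.
- move: Hr Hir Z1 ZL ZR; case: r => [|[|[|[|[|[|[|[|[|[|r]]]]]]]]]] //= Hr Hir Z1 ZL ZR;
    try discriminate; have := ZL isT; try discriminate.
  case: Z1 => <- [] E1. by rewrite E1 eqxx in Hxv.
- have Evy : E u y := item_edge Hc Ec.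
  have [Euy Hyy] := cpE Evy.
  have Fin : u = v -> cyc_pred cyc v w = cyc_pred cyc v y -> c = j.
    move=> Euv Ep. subst u.
    have Ey : y = w.
      apply: (cp_inj (Hcyc_uniq v)); rewrite ?Hcyc_mem //.
    apply: uniqX => //. by rewrite Ec Ej Ey.
  move: Hr Hir Z1 ZL ZR; case: r => [|[|[|[|[|[|[|[|[|[|r]]]]]]]]]] //= Hr Hir Z1 ZL ZR;
    try discriminate; case: Z1 => Euv; subst u.
  + case: (ZR isT) => /(Fin erefl) Ecj. exists 0 => //. lia.
  + case: (ZR isT) => /(Fin erefl) Ecj. exists 1 => //. lia.
  + case: (ZR isT) => /(Fin erefl) Ecj. exists 2 => //. lia.
  + case: (ZR isT) => /(Fin erefl) Ecj. exists 3 => //. lia.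
  + case: (ZR isT) => Ex. case: (ZL isT) => Ex2.
    by rewrite -Ex2 Ex eqxx in Hyy.
Qed.

Lemma sizez : size z = 10 * size X. Proof. exact: size_bs. Qed.

Lemma eE j v w r : j < size X -> nth dx X j = EItem v w -> r < 10 ->
  nth d z (10 * j + r) = nth d (e_str cyc v w) r.
Proof. move=> Hj Ej Hr. by rewrite (zat' Hj Hr erefl) Ej. Qed.

Lemma per j v w s : j < size X -> nth dx X j = EItem v w -> s <= 6 ->
  nth d z (10 * j + s) = nth d z (10 * j + s.+2).
Proof.
move=> Hj Ej Hs. have h1 : s < 10 by lia. have h2 : s.+2 < 10 by lia.
rewrite !(eE Hj Ej) //.
by move: Hs h1 h2; case: s => [|[|[|[|[|[|[|s]]]]]]].
Qed.

Lemma NC_e j v w p : j < size X -> nth dx X j = EItem v w ->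
  10 * j <= p -> p + 5 <= 10 * j + 10 -> p + lz_len z p <= 10 * j + 10.
Proof.
move=> Hj Ej Hp1 Hp2. rewrite leqNgt; apply/negP => Hk.
have Hs := sizez.
have Hpk : p < 10 * j + 10 by lia.
have Hpz : p < size z by lia.
have [q Hq Hm] := cross d Hpk Hpz Hk.
set i := q + (10 * j + 5 - p).
have M : forall s, s < 5 -> nth d z (i + s) = nth d (e_str cyc v w) (5 + s).
  move=> s Hs5. have Ht : 10 * j + 5 - p + s < 10 * j + 10 - p by lia.
  have := Hm _ Ht.
  rewrite (_ : p + (10 * j + 5 - p + s) = 10 * j + (5 + s)); last lia.
  rewrite (eE Hj Ej); last lia.
  rewrite /i (_ : q + (10 * j + 5 - p + s) = q + (10 * j + 5 - p) + s) //; lia.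
have Hi2 : i.+2 < size z by rewrite /i; lia.
have G0 : nth d z i = SymV (cyc_pred cyc v w) by rewrite -(addn0 i) M.
have G1 : nth d z i.+1 = SymP v by rewrite -addn1 M.
have G2 : nth d z i.+2 = SymV (cyc_pred cyc v w) by rewrite -addn2 M.
have [m Hm3 Him] := Gl Hj Ej Hi2 G0 G1 G2.
have := M 4 isT. rewrite (_ : i + 4 = 10 * j + (2 * m + 3)); last lia.
rewrite (eE Hj Ej); last lia.
have : m != 3 by apply/eqP => m3; rewrite /i in Him; lia.
have [_ Hxw] := cpE (item_edge Hj Ej).
move: Hm3; case: m {Him} => [|[|[|[|m]]]] //= _ _ [Ew]; by rewrite Ew eqxx in Hxw.
Qed.

Lemma NC_s j v p : j < size X -> nth dx X j = SItem v ->
  10 * j <= p -> p < 10 * j + 10 -> p + lz_len z p <= 10 * j + 10.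
Proof.
move=> Hj Ej Hp1 Hp2. rewrite leqNgt; apply/negP => Hk.
have Hs := sizez.
have Hpz : p < size z by lia.
have [q Hq Hm] := cross d Hp2 Hpz Hk.
have Ht : 10 * j + 9 - p < 10 * j + 10 - p by lia.
have := Hm _ Ht.
rewrite (_ : p + (10 * j + 9 - p) = 10 * j + 9); last lia.
have Z9 := zat' Hj (isT : 9 < 10) (erefl (10 * j + 9)). rewrite Ej /= in Z9.
rewrite Z9 => Hz.
have Hiz : q + (10 * j + 9 - p) < size z by lia.
have [c Hc [Ec Hic]] := posD Hiz Hz.
have Ecj : c = j by apply: uniqX => //; rewrite Ec Ej.
lia.
Qed.

Lemma walk_s j v : j < size X -> nth dx X j = SItem v -> phrase_start z (10 * j) ->
  exists p, [/\ phrase_start z p, p < 10 * j + 10 & p + lz_len z p = 10 * j + 10].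
Proof.
move=> Hj Ej H0. have Hs := sizez.
suff : forall n p, 10 * j + 10 - p <= n -> 10 * j <= p < 10 * j + 10 -> phrase_start z p ->
  exists p, [/\ phrase_start z p, p < 10 * j + 10 & p + lz_len z p = 10 * j + 10].
  move=> /(_ 10 (10 * j)) H; apply: H => //; lia.
elim=> [|n IH] p Hn /andP [Hp1 Hp2] Hps; first lia.
have Hpz : p < size z by lia.
have [_ Hl _] := len_ok Hpz.
have Hc := NC_s Hj Ej Hp1 Hp2.
case: (ltngtP (p + lz_len z p) (10 * j + 10)) => Hcmp; last by exists p.
  apply: (IH (p + lz_len z p)); first lia.
    apply/andP; split; lia.
  exact: psS.
lia.
Qed.

Lemma mid j v w p : j < size X -> nth dx X j = EItem v w -> phrase_start z p ->
  10 * j + 2 <= p -> p <= 10 * j + 4 -> p + lz_len z p = 10 * j + 10.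
Proof.
move=> Hj Ej Hps Hp1 Hp2. have Hs := sizez.
apply/eqP; rewrite eqn_leq; apply/andP; split.
  apply: (NC_e Hj Ej); lia.
apply: (@reach _ d z p (10 * j + 10) (p - 2)); try (rewrite ?sizez; lia).
move=> t Ht.
have := per Hj Ej (_ : p - 2 - 10 * j + t <= 6).
rewrite (_ : 10 * j + (p - 2 - 10 * j + t) = p - 2 + t); last lia.
rewrite (_ : 10 * j + (p - 2 - 10 * j + t).+2 = p + t) //; last lia.
apply; lia.
Qed.

Lemma step_e j v w : j < size X -> nth dx X j = EItem v w -> phrase_start z (10 * j) ->
  exists p, [/\ phrase_start z p, p < 10 * j + 10 & p + lz_len z p = 10 * j + 10].
Proof.
move=> Hj Ej H0. have Hs := sizez.
have Hbz : 10 * j < size z by lia.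
have [Okb Lb1 Lbs] := len_ok Hbz.
have Z1 : nth d z (10 * j + 1) = SymV (cyc_pred cyc v w) by rewrite (eE Hj Ej).
have Z2 : nth d z (10 * j + 2) = SymP v by rewrite (eE Hj Ej).
have Z3 : nth d z (10 * j + 3) = SymV (cyc_pred cyc v w) by rewrite (eE Hj Ej).
have Hz10 : 10 * j + 10 <= size z by lia.
case: (leqP 5 (lz_len z (10 * j))) => HL.
  have H1 : 1 < lz_len z (10 * j) by lia.
  have [q Hq Hm] := ok_match d Okb H1.
  have Hi2 : q.+3 < size z by lia.
  have G0 : nth d z q.+1 = SymV (cyc_pred cyc v w) by rewrite -addn1 Hm //; lia.
  have G1 : nth d z q.+2 = SymP v by rewrite -addn2 Hm //; lia.
  have G2 : nth d z q.+3 = SymV (cyc_pred cyc v w) by rewrite -addn3 Hm //; lia.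
  have [m Hm3 Him] := Gl Hj Ej Hi2 G0 G1 G2.
  have Eq : q = 10 * j - 2 by lia.
  exists (10 * j); split => //; first lia.
  apply/eqP; rewrite eqn_leq; apply/andP; split.
    apply: (NC_e Hj Ej); lia.
  apply: (@reach _ d z (10 * j) (10 * j + 10) q) => //; try lia.
  move=> t Ht.
  case: (ltnP t 2) => Ht2; first by apply: Hm; lia.
  have := per Hj Ej (_ : t - 2 <= 6).
  rewrite (_ : 10 * j + (t - 2) = q + t); last lia.
  rewrite (_ : 10 * j + (t - 2).+2 = 10 * j + t) //; last lia.
  apply; lia.
have [Hps1 _] : phrase_start z (10 * j + lz_len z (10 * j)) /\ True by split => //; exact: psS.
case: (ltnP 1 (lz_len z (10 * j))) => H1.
  exists (10 * j + lz_len z (10 * j)); split => //; first lia.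
  apply: (mid Hj Ej) => //; lia.
have Eb : lz_len z (10 * j) = 1 by lia.
rewrite Eb in Hps1.
have Hb1z : 10 * j + 1 < size z by lia.
have [Ok1 L11 L1s] := len_ok Hb1z.
have [Hps2 _] : phrase_start z (10 * j + 1 + lz_len z (10 * j + 1)) /\ True
  by split => //; exact: psS.
case: (leqP 4 (lz_len z (10 * j + 1))) => HL1.
  have H1' : 1 < lz_len z (10 * j + 1) by lia.
  have [q Hq Hm] := ok_match d Ok1 H1'.
  have Hi2 : q.+2 < size z by lia.
  have G0 : nth d z q = SymV (cyc_pred cyc v w).
    by rewrite -(addn0 q) Hm; [rewrite addn0 Z1 | lia].
  have G1 : nth d z q.+1 = SymP v.
    by rewrite -addn1 Hm; [rewrite -addnA Z2 | lia].
  have G2 : nth d z q.+2 = SymV (cyc_pred cyc v w).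
    by rewrite -addn2 Hm; [rewrite -addnA Z3 | lia].
  have [m Hm3 Him] := Gl Hj Ej Hi2 G0 G1 G2.
  have Eq : q = 10 * j - 1 by lia.
  exists (10 * j + 1); split => //; first lia.
  apply/eqP; rewrite eqn_leq; apply/andP; split.
    apply: (NC_e Hj Ej); lia.
  apply: (@reach _ d z (10 * j + 1) (10 * j + 10) q) => //; try lia.
  move=> t Ht.
  case: (ltnP t 1) => Ht2; first by apply: Hm; lia.
  have := per Hj Ej (_ : t - 1 <= 6).
  rewrite (_ : 10 * j + (t - 1) = q + t); last lia.
  rewrite (_ : 10 * j + (t - 1).+2 = 10 * j + 1 + t) //; last lia.
  apply; lia.
exists (10 * j + 1 + lz_len z (10 * j + 1)); split => //; first lia.
apply: (mid Hj Ej) => //; lia.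
Qed.

Lemma final j : j < size X ->
  phrase_ends_at z (size (batch_str cyc (take j.+1 X))).
Proof.
move=> Hj. have Hs := sizez.
have PS : forall n, n <= size X -> phrase_start z (10 * n).
  elim=> [|n IH] Hn; first by rewrite muln0; exact: ps0.
  have Hn' : n < size X by lia.
  have [p [Hp1 Hp2 Hp3]] : exists p, [/\ phrase_start z p, p < 10 * n + 10 & p + lz_len z p = 10 * n + 10].
    case Ej: (nth dx X n) => [v|v w].
      exact: (walk_s Hn' Ej (IH (ltnW Hn'))).
    exact: (step_e Hn' Ej (IH (ltnW Hn'))).
  rewrite (_ : 10 * n.+1 = p + lz_len z p); last lia. apply: psS => //. rewrite sizez; lia.
have [p [Hp1 Hp2 Hp3]] : exists p, [/\ phrase_start z p, p < 10 * j + 10 & p + lz_len z p = 10 * j + 10].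
  case Ej: (nth dx X j) => [v|v w].
    exact: (walk_s Hj Ej (PS _ (ltnW Hj))).
  exact: (step_e Hj Ej (PS _ (ltnW Hj))).
exists p; split => //; first by rewrite sizez; lia.
rewrite size_bs size_takel // Hp3. lia.
Qed.
End Graph.

Theorem lemma5 (V : finType) (E : rel V) (cyc : V -> seq V)
  (Hloop : forall v, ~~ E v v)
  (Hdeg : forall v, #|[set w | E v w]| != 1)
  (Hcyc_uniq : forall v, uniq (cyc v))
  (Hcyc_mem : forall v w, (w \in cyc v) = E v w)
  (X : seq (item V))
  (HXuniq : uniq X)
  (HXin : all (item_in E) X) :
  forall j, j < size X ->
    phrase_ends_at (batch_str cyc X) (size (batch_str cyc (take j.+1 X))).
Proof.
move=> j Hj.
have x0 : item V by case: X Hj {HXuniq HXin} => [|x _] //.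
have v0 : V by case: x0 => [v|v _]; exact v.
exact: (final Hloop Hdeg Hcyc_uniq Hcyc_mem HXuniq HXin (SymV v0) x0 Hj).
Qed.
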